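(* Assume (P). Let $T>0$ and $u\in C([0,T]\times\mathbb{R}^d)$ be such that $\|u(t,\cdot)-u(0,\cdot)\|_\infty\to0$ as $t\to0^+$ and $\sup_{t\in[0,T]}\|u(t,\cdot)\mathbf{1}_{\{|\cdot|\ge r\}}\|_\infty\to0$ as $r\to\infty$. Assume that for all $(t,x)\in(0,T]\times\mathbb{R}^d$, $\partial_tu(t,x)$ exists, $\mathcal{L}^{\kappa,0^+}_xu(t,x)$ is well defined, and $\partial_tu(t,x)=\mathcal{L}^{\kappa,0^+}_xu(t,x)$. If $\sup_{x\in\mathbb{R}^d}u(0,x)\ge0$, then $\sup_{x\in\mathbb{R}^d}u(t,x)\le\sup_{x\in\mathbb{R}^d}u(0,x)$ for every $t\in(0,T]$. Consequently, two such functions $u_1,u_2$ with $u_1(0,\cdot)=u_2(0,\cdot)$ coincide on $[0,T]\times\mathbb{R}^d$.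
   Context: Let $d\in\mathbb{N}$ and let $\nu:[0,\infty)\to[0,\infty]$ be non-increasing with $\int_{\mathbb{R}^d}(1\wedge|x|^2)\nu(|x|)\,dx<\infty$. Let $J:\mathbb{R}^d\to[0,\infty]$ be Borel with $\Lambda^{-1}\nu(|x|)\le J(x)\le\Lambda\nu(|x|)$ for all $x$, for some $\Lambda\ge1$. Let $\kappa:\mathbb{R}^d\times\mathbb{R}^d\to\mathbb{R}$ be Borel with $0<\kappa_0\le\kappa(x,z)\le\kappa_1$ and $|\kappa(x,z)-\kappa(y,z)|\le\kappa_2|x-y|^{\beta}$ for all $x,y,z$, where $\beta\in(0,1)$. For $r>0$ let $h(r)=\int_{\mathbb{R}^d}\big(1\wedge \tfrac{|x|^2}{r^2}\big)\nu(|x|)\,dx$. (WLSC): there are $\alpha_h\in(0,2]$, $C_h\ge1$ with $h(r)\le C_h\lambda^{\alpha_h}h(\lambda r)$ for all $\lambda\le1$, $r\le1$. (WUSC): there are $\beta_h\in(0,2]$, $c_h\in(0,1]$ with $h(r)\ge c_h\lambda^{\beta_h}h(\lambda r)$ for all $\lambda\le1$, $r\le1$. Case (P1): WLSC holds with $1<\alpha_h\le2$. Case (P2): WLSC and WUSC hold with $0<\alpha_h\le\beta_h<1$. Case (P3): WLSC holds, $J(z)=J(-z)$ and $\kappa(x,z)=\kappa(x,-z)$ for all $x,z$. ''(P)'' means one of (P1), (P2), (P3) holds. In the cases (P1), (P2), (P3) respectively, the operator is $\mathcal{L}^{\kappa}f(x)=\int_{\mathbb{R}^d}(f(x+z)-f(x)-\mathbf{1}_{|z|<1}\langle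 z,\nabla f(x)\rangle)\kappa(x,z)J(z)\,dz$, $\mathcal{L}^{\kappa}f(x)=\int_{\mathbb{R}^d}(f(x+z)-f(x))\kappa(x,z)J(z)\,dz$, $\mathcal{L}^{\kappa}f(x)=\tfrac12\int_{\mathbb{R}^d}(f(x+z)+f(x-z)-2f(x))\kappa(x,z)J(z)\,dz$. For $\varepsilon\in[0,1]$, $\mathcal{L}^{\kappa,\varepsilon}$ denotes the same expression with $J(z)$ replaced by $J(z)\mathbf{1}_{|z|>\varepsilon}$; $\mathcal{L}^{\kappa,\varepsilon}f(x)$ is well defined if the integral converges absolutely and, in case (P1), $\nabla f(x)$ exists. The weak operator is $\mathcal{L}^{\kappa,0^+}f(x):=\lim_{\varepsilon\to0^+}\mathcal{L}^{\kappa,\varepsilon}f(x)$, well defined when $\mathcal{L}^{\kappa,\varepsilon}f$ is well defined for all $\varepsilon\in(0,1]$ and the limit exists. A subscript $x$ indicates action in the variable $x$. *)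

(* Defs.v *)
From HB Require Import structures.
From mathcomp Require Import all_boot all_order all_algebra.
From mathcomp Require Import all_classical all_reals all_analysis measurable_realfun.
Import Order.TTheory GRing.Theory Num.Theory.
Import numFieldNormedType.Exports.

Set Implicit Arguments.
Unset Strict Implicit.
Unset Printing Implicit Defensive.

Local Open Scope classical_set_scope.
Local Open Scope ring_scope.

(** R^d is represented by row vectors ['rV[R]_d] (with their usual topology);
    [BRd R d] is the same carrier equipped with the Borel sigma-algebra
    (generated by the open sets). *)
Definition BRd (R : realType) (d : nat) := g_sigma_algebraType (@open 'rV[R]_d).

Definition enorm (R : realType) (d : nat) (x : 'rV[R]_d) : R :=
  Num.sqrt (\sum_(i < d) x 0 i ^+ 2).
Definition dotv (R : realType) (d : nat) (x y : 'rV[R]_d) : R :=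
  \sum_(i < d) x 0 i * y 0 i.

(** [mu] is Lebesgue measure on the Borel sets of R^d: it gives every
    half-open box its volume (this determines it uniquely). *)
Definition is_lebesgue (R : realType) (d : nat) (mu : {measure set BRd R d -> \bar R}) :=
  forall a b : 'rV[R]_d, (forall i, a 0 i <= b 0 i) ->
    mu [set x : BRd R d | forall i, a 0 i <= x 0 i < b 0 i] = (\prod_(i < d) (b 0 i - a 0 i))%:E.

Definition hfun (R : realType) (d : nat) (mu : {measure set BRd R d -> \bar R})
  (nu : R -> \bar R) (r : R) : \bar R :=
  (\int[mu]_x ((Order.min 1 (enorm x ^+ 2 / r ^+ 2))%:E * nu (enorm x)))%E.

Definition WLSC (R : realType) (d : nat) (mu : {measure set BRd R d -> \bar R})
  (nu : R -> \bar R) (alpha C : R) :=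
  0 < alpha <= 2 /\ 1 <= C /\
  forall lam r : R, 0 < lam <= 1 -> 0 < r <= 1 ->
    (hfun mu nu r <= (C * lam `^ alpha)%:E * hfun mu nu (lam * r))%E.

Definition WUSC (R : realType) (d : nat) (mu : {measure set BRd R d -> \bar R})
  (nu : R -> \bar R) (beta c : R) :=
  0 < beta <= 2 /\ 0 < c <= 1 /\
  forall lam r : R, 0 < lam <= 1 -> 0 < r <= 1 ->
    ((c * lam `^ beta)%:E * hfun mu nu (lam * r) <= hfun mu nu r)%E.

Inductive Pcase := P1 | P2 | P3.

Definition Pholds (R : realType) (d : nat) (mu : {measure set BRd R d -> \bar R})
  (nu : R -> \bar R) (J : 'rV[R]_d -> \bar R) (kappa : 'rV[R]_d -> 'rV[R]_d -> R)
  (c : Pcase) : Prop :=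
  match c with
  | P1 => exists alpha C, WLSC mu nu alpha C /\ 1 < alpha
  | P2 => exists alpha C beta c', WLSC mu nu alpha C /\ WUSC mu nu beta c' /\
                                  alpha <= beta /\ beta < 1
  | P3 => (exists alpha C, WLSC mu nu alpha C) /\ (forall z, J z = J (- z)) /\
          (forall x z, kappa x z = kappa x (- z))
  end.

Definition grad (R : realType) (d : nat) (f : 'rV[R]_d -> R) (x : 'rV[R]_d) : 'rV[R]_d :=
  \row_(i < d) ('D_(delta_mx 0 i) f x).

Definition Lkern (R : realType) (d : nat) (c : Pcase) (f : 'rV[R]_d -> R)
  (x z : 'rV[R]_d) : R :=
  match c with
  | P1 => f (x + z) - f x - (if enorm z < 1 then dotv z (grad f x) else 0)
  | P2 => f (x + z) - f x
  | P3 => f (x + z) + f (x - z) - 2 * f x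
  end.

Definition Lintegrand (R : realType) (d : nat) (J : 'rV[R]_d -> \bar R)
  (kappa : 'rV[R]_d -> 'rV[R]_d -> R) (c : Pcase) (f : 'rV[R]_d -> R)
  (x : 'rV[R]_d) (eps : R) (z : 'rV[R]_d) : \bar R :=
  ((Lkern c f x z * kappa x z)%:E * (J z * (if eps < enorm z then 1 else 0)%:E))%E.

Definition Leps_wd (R : realType) (d : nat) (mu : {measure set BRd R d -> \bar R})
  (J : 'rV[R]_d -> \bar R) (kappa : 'rV[R]_d -> 'rV[R]_d -> R) (c : Pcase)
  (f : 'rV[R]_d -> R) (x : 'rV[R]_d) (eps : R) : Prop :=
  (c = P1 -> forall i : 'I_d, derivable f x (delta_mx 0 i)) /\
  mu.-integrable [set: BRd R d] (Lintegrand J kappa c f x eps).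

Definition Leps (R : realType) (d : nat) (mu : {measure set BRd R d -> \bar R})
  (J : 'rV[R]_d -> \bar R) (kappa : 'rV[R]_d -> 'rV[R]_d -> R) (c : Pcase)
  (f : 'rV[R]_d -> R) (x : 'rV[R]_d) (eps : R) : R :=
  (if c is P3 then 2^-1 else 1) *
  fine (\int[mu]_z Lintegrand J kappa c f x eps z)%E.

Definition Lweak_is (R : realType) (d : nat) (mu : {measure set BRd R d -> \bar R})
  (J : 'rV[R]_d -> \bar R) (kappa : 'rV[R]_d -> 'rV[R]_d -> R) (c : Pcase)
  (f : 'rV[R]_d -> R) (x : 'rV[R]_d) (l : R) : Prop :=
  (forall eps, 0 < eps <= 1 -> Leps_wd mu J kappa c f x eps) /\
  Leps mu J kappa c f x eps @[eps --> 0^'+] --> l.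

(** partial_t u(t,x) = l, for u defined on [0,T] x R^d (one-sided at t = T) *)
Definition dt_is (R : realType) (d : nat) (T : R) (u : R -> 'rV[R]_d -> R)
  (t : R) (x : 'rV[R]_d) (l : R) : Prop :=
  (fun s => (u s x - u t x) / (s - t)) @ within [set s | 0 <= s <= T] (t^') --> l.

Definition is_solution (R : realType) (d : nat) (mu : {measure set BRd R d -> \bar R})
  (J : 'rV[R]_d -> \bar R) (kappa : 'rV[R]_d -> 'rV[R]_d -> R) (c : Pcase)
  (T : R) (u : R -> 'rV[R]_d -> R) : Prop :=
  {within [set p : R * 'rV[R]_d | 0 <= p.1 <= T], continuous (fun p => u p.1 p.2)} /\
  (forall e : R, 0 < e -> exists delta : R, 0 < delta /\
     forall t x, 0 < t <= T -> t < delta -> `|u t x - u 0 x| <= e) /\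
  (forall e : R, 0 < e -> exists r0 : R, forall r, r0 <= r ->
     forall t x, 0 <= t <= T -> r <= enorm x -> `|u t x| <= e) /\
  (forall t x, 0 < t <= T -> exists l : R,
     dt_is T u t x l /\ Lweak_is mu J kappa c (u t) x l).

(* Main.v *)
Require Import Defs.
From HB Require Import structures.
From mathcomp Require Import all_boot all_order all_algebra.
From mathcomp Require Import all_classical all_reals all_analysis measurable_realfun.
From mathcomp Require Import ring lra.
Import Order.TTheory GRing.Theory Num.Theory.
Import numFieldNormedType.Exports.
Local Open Scope classical_set_scope.
Local Open Scope ring_scope.
Set Implicit Arguments.
Unset Strict Implicit.
Unset Printing Implicit Defensive.

Lemma Leps_le (R : realType) (d : nat) (mu : {measure set BRd R d -> \bar R})
  (J : 'rV[R]_d -> \bar R) (kappa : 'rV[R]_d -> 'rV[R]_d -> R) (c : Pcase)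
  (f g : 'rV[R]_d -> R) (x : 'rV[R]_d) (eps : R) :
  (forall z, (0 <= J z)%E) -> (forall z, 0 < kappa x z) ->
  Leps_wd mu J kappa c f x eps -> Leps_wd mu J kappa c g x eps ->
  (forall z, Lkern c f x z <= Lkern c g x z) ->
  Leps mu J kappa c f x eps <= Leps mu J kappa c g x eps.
Proof.
move=> J0 k0 [_ If] [_ Ig] Hk; rewrite /Leps.
apply: ler_wpM2l; first by case: c {If Ig Hk}.
apply: fine_le; [exact: integrable_fin_num If | exact: integrable_fin_num Ig|].
apply: le_integral => // z _; rewrite /Lintegrand.
apply: lee_wpmul2r.
  by apply: mule_ge0 => //; rewrite lee_fin; case: ifP.
by rewrite lee_fin; apply: ler_wpM2r; [exact: ltW | exact: Hk].
Qed.

Lemma dir_eq (R : realType) (d : nat) (f g : 'rV[R]_d -> R) (a v : 'rV[R]_d) :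
  derivable f a v -> derivable g a v ->
  (forall y, f y - g y <= f a - g a) -> 'D_v f a = 'D_v g a.
Proof.
move=> df dg Hmax.
set qf := fun h : R => h^-1 *: ((f \o shift a) (h *: v) - f a).
set qg := fun h : R => h^-1 *: ((g \o shift a) (h *: v) - g a).
have Hf : qf @ 0^' --> 'D_v f a := df.
have Hg : qg @ 0^' --> 'D_v g a := dg.
have Hd := cvgB Hf Hg.
have E : forall h, qf h - qg h =
   h^-1 * ((f (h *: v + a) - g (h *: v + a)) - (f a - g a)).
  move=> h; rewrite /qf /qg /= -scalerBr; congr (_ * _); lra.
have Hn : forall h, (f (h *: v + a) - g (h *: v + a)) - (f a - g a) <= 0.
  move=> h; have := Hmax (h *: v + a); lra.
have Hr : (qf - qg) @ 0^'+ --> 'D_v f a - 'D_v g a.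
  apply: cvg_trans (Hd _). apply: cvg_app => P /=.
  rewrite !nbhs_filterE => HP.
  have HP' : \forall h \near (0:R), h != 0 -> P h := HP.
  rewrite /within; move: HP'; apply: filterS => h HP2 h0; apply: HP2; by rewrite gt_eqF.
have Hl : (qf - qg) @ 0^'- --> 'D_v f a - 'D_v g a.
  apply: cvg_trans (Hd _). apply: cvg_app => P /=.
  rewrite !nbhs_filterE => HP.
  have HP' : \forall h \near (0:R), h != 0 -> P h := HP.
  rewrite /within; move: HP'; apply: filterS => h HP2 h0; apply: HP2; by rewrite lt_eqF.
have H1 : 'D_v f a - 'D_v g a <= 0.
  apply: (cvgr_to_le Hr); near=> h.
  have h0 : 0 < h by near: h; exact: nbhs_right_gt.
  rewrite fctE E; apply: mulr_ge0_le0; [by rewrite invr_ge0 ltW | exact: Hn].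
have H2 : 0 <= 'D_v f a - 'D_v g a.
  apply: (cvgr_to_ge Hl); near=> h.
  have h0 : h < 0 by near: h; exact: nbhs_left_lt.
  rewrite fctE E; apply: mulr_le0; [by rewrite invr_le0 ltW | exact: Hn].
lra.
Unshelve. all: by end_near.
Qed.

Lemma Lkern_le (R : realType) (d : nat) (c : Pcase)
  (f g : 'rV[R]_d -> R) (x : 'rV[R]_d) :
  (forall y, f y - g y <= f x - g x) ->
  (c = P1 -> forall i : 'I_d, derivable f x (delta_mx 0 i)) ->
  (c = P1 -> forall i : 'I_d, derivable g x (delta_mx 0 i)) ->
  forall z, Lkern c f x z <= Lkern c g x z.
Proof.
move=> Hmax df dg z; case: c df dg => df dg /=.
- have -> : grad f x = grad g x.
    apply/rowP => i; rewrite !mxE; apply: dir_eq; [exact: df|exact: dg|exact: Hmax].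
  have := Hmax (x + z); lra.
- have := Hmax (x + z); lra.
- have := Hmax (x + z); have := Hmax (x - z); lra.
Qed.
Lemma near_left_pos (R : realType) (t : R) : 0 < t -> \forall s \near t^'-, 0 < s.
Proof.
move=> t0; rewrite /at_left /within /=.
by move: (lt_nbhsr t0); apply: filterS => s s0 _.
Qed.

Lemma time_lemma (R : realType) (f : R -> R) (t T l eps : R) :
  0 < t <= T ->
  (fun s => (f s - f t) / (s - t)) @ within [set s | 0 <= s <= T] (t^') --> l ->
  (forall s, 0 <= s < t -> f s - eps * s <= f t - eps * t) -> eps <= l.
Proof.
move=> /andP[t0 tT] H Hmax.
have H' : (fun s => (f s - f t) / (s - t)) @ t^'- --> l.
  apply: cvg_trans H; apply: cvg_app => P /=.
  rewrite !nbhs_filterE /within /at_left /= => HP.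
  have HP' : \forall s \near t, s != t -> 0 <= s <= T -> P s := HP.
  rewrite /within; move: HP' (lt_nbhsr t0); apply: filterS2 => s HP2 s0 st.
  apply: HP2; first by rewrite lt_eqF.
  rewrite (ltW s0) /=; apply: le_trans tT; exact: ltW.
apply: (cvgr_to_ge H').
near=> s.
have st : s < t by near: s; exact: nbhs_left_lt.
have s0 : 0 < s by near: s; apply: near_left_pos.
rewrite ler_ndivlMr ?subr_lt0 //.
have := Hmax s; rewrite (ltW s0) st => /(_ isT) => h. lra.
Unshelve. all: by end_near.
Qed.

Lemma L_le (R : realType) (d : nat) (mu : {measure set BRd R d -> \bar R})
  (J : 'rV[R]_d -> \bar R) (kappa : 'rV[R]_d -> 'rV[R]_d -> R) (c : Pcase)
  (f g : 'rV[R]_d -> R) (x : 'rV[R]_d) (l1 l2 : R) :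
  Lweak_is mu J kappa c f x l1 -> Lweak_is mu J kappa c g x l2 ->
  (forall eps, 0 < eps <= 1 -> Leps mu J kappa c f x eps <= Leps mu J kappa c g x eps) ->
  l1 <= l2.
Proof.
move=> [_ H1] [_ H2] Hle.
have H := cvgB H2 H1.
rewrite -subr_ge0; apply: (cvgr_to_ge (H _)); near=> e.
rewrite fctE subr_ge0; apply: Hle; apply/andP; split.
  by near: e; exact: nbhs_right_gt.
by near: e; apply: nbhs_right_le; exact: ltr01.
Unshelve. all: by end_near.
Qed.

Lemma enorm_ge0 (R : realType) (d : nat) (x : 'rV[R]_d) : 0 <= enorm x.
Proof. exact: sqrtr_ge0. Qed.

Lemma coord_le_enorm (R : realType) (d : nat) (x : 'rV[R]_d) (i : 'I_d) :
  `|x ord0 i| <= enorm x.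
Proof.
have E : (0 : 'I_1) = ord0 by apply: val_inj.
rewrite /enorm E -sqrtr_sqr; apply: ler_wsqrtr.
rewrite (bigD1 i) //= lerDl; apply: sumr_ge0 => j _; exact: sqr_ge0.
Qed.
Lemma core (R : realType) (d : nat) (mu : {measure set BRd R d -> \bar R})
  (J : 'rV[R]_d -> \bar R) (kappa : 'rV[R]_d -> 'rV[R]_d -> R) (c : Pcase)
  (T : R) (u1 u2 : R -> 'rV[R]_d -> R) (M : R) :
  (forall z, (0 <= J z)%E) -> (forall x z, 0 < kappa x z) ->
  is_solution mu J kappa c T u1 -> is_solution mu J kappa c T u2 ->
  0 <= M -> (forall x, u1 0 x - u2 0 x <= M) ->
  forall t x, 0 < t <= T -> u1 t x - u2 t x <= M.
Proof.
move=> J0 k0 [C1 [_ [D1 L1]]] [C2 [_ [D2 L2]]] M0 HM t1 x1 /andP[t10 t1T].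
rewrite leNgt; apply/negP => Hlt.
set a := u1 t1 x1 - u2 t1 x1 - M.
have a0 : 0 < a by rewrite /a; lra.
set eps := a / (2 * t1).
have eps0 : 0 < eps by rewrite /eps divr_gt0 // mulr_gt0.
have epst1 : eps * t1 = a / 2.
  by rewrite /eps; field; rewrite gt_eqF.
have e0 : 0 < a / 8 by rewrite divr_gt0.
have [r1 Hr1] := D1 _ e0.
have [r2 Hr2] := D2 _ e0.
set r := Num.max (Num.max r1 r2) (enorm x1).
have rr1 : r1 <= r by rewrite /r !le_max lexx.
have rr2 : r2 <= r by rewrite /r !le_max lexx orbT.
have rx1 : enorm x1 <= r by rewrite /r !le_max lexx orbT.
set B := [set y : 'rV[R]_d | forall i, `[- r, r]%classic (y ord0 i)].
have inB : forall y, enorm y <= r -> B y.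
  move=> y yr i /=; rewrite in_itv /= -ler_norml.
  apply: (le_trans _ yr); apply: coord_le_enorm.
set K := `[0, t1]%classic `*` B.
set v := fun p : R * 'rV[R]_d => u1 p.1 p.2 - u2 p.1 p.2 - eps * p.1.
have KD : K `<=` [set p : R * 'rV[R]_d | 0 <= p.1 <= T].
  move=> [s y] [/= + _]; rewrite in_itv /= => /andP[s0 st].
  by rewrite s0 (le_trans st t1T).
have cv : {within K, continuous v}.
  change (continuous ((from_subspace K (fun p : R * 'rV[R]_d => u1 p.1 p.2)
     - from_subspace K (fun p : R * 'rV[R]_d => u2 p.1 p.2))
     - from_subspace K (fun p : R * 'rV[R]_d => eps * p.1))).
  move=> p; apply: continuousB; first apply: continuousB.
  - exact: (continuous_subspaceW KD C1).
  - exact: (continuous_subspaceW KD C2).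
  - move: p; apply: continuous_subspaceT => p.
    apply: cvgM; first exact: cvg_cst.
    exact: cvg_fst.
have cK : compact K.
  apply: compact_setX; first exact: segment_compact.
  by apply: (@rV_compact R d (fun=> `[- r, r]%classic)) => i; exact: segment_compact.
have Kt1 : K (t1, x1).
  split; last exact: inB.
  by rewrite /= in_itv /= lexx ltW.
have K0 : K !=set0 by exists (t1, x1).
have [[ts xs] /set_mem Kc vmax] := compact_EVT_max K0 cK cv.
have vt1 : v (t1, x1) = M + a / 2 by rewrite /v /= epst1 /a; field.
have vc : M + a / 2 <= v (ts, xs).
  by rewrite -vt1; apply: vmax; apply: mem_set.
have [tsI _] := Kc.
move: tsI; rewrite /= in_itv /= => /andP[ts0 tst1].
have gmax : forall s y, 0 <= s <= t1 -> v (s, y) <= v (ts, xs).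
  move=> s y /andP[s0 st1].
  have [yr|ry] := leP (enorm y) r.
    apply: vmax; apply: mem_set; split; last exact: inB.
    by rewrite /= in_itv /= s0 st1.
  have sT : 0 <= s <= T by rewrite s0 (le_trans st1 t1T).
  have := Hr1 r1 (lexx _) s y sT (le_trans rr1 (ltW ry)).
  have := Hr2 r2 (lexx _) s y sT (le_trans rr2 (ltW ry)).
  rewrite !ler_norml => /andP[h1 h2] /andP[h3 h4].
  have : 0 <= eps * s by rewrite mulr_ge0 // ltW.
  move: vc; rewrite /v /=; lra.
have tspos : 0 < ts.
  rewrite lt_neqAle ts0 andbT; apply/eqP => ts_eq.
  move: vc; rewrite /v /= -ts_eq mulr0 subr0.
  have := HM xs; lra.
have tsT : 0 < ts <= T by rewrite tspos (le_trans tst1 t1T).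
have [l1 [dt1 Lw1]] := L1 ts xs tsT.
have [l2 [dt2 Lw2]] := L2 ts xs tsT.
have Htime : eps <= l1 - l2.
  apply: (@time_lemma R (fun s => u1 s xs - u2 s xs) ts T).
  - exact: tsT.
  - have -> : (fun s => (u1 s xs - u2 s xs - (u1 ts xs - u2 ts xs)) / (s - ts)) =
       (fun s => (u1 s xs - u1 ts xs) / (s - ts) - (u2 s xs - u2 ts xs) / (s - ts)).
      apply: funext => s; rewrite -mulrBl; congr (_ * _); lra.
    exact: cvgB dt1 dt2.
  - move=> s /andP[s0 sts].
    have := gmax s xs; rewrite s0 (le_trans (ltW sts) tst1) => /(_ isT).
    rewrite /v /=; lra.
have xmax : forall y, u1 ts y - u2 ts y <= u1 ts xs - u2 ts xs.
  move=> y; have := gmax ts y; rewrite ts0 tst1 => /(_ isT).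
  rewrite /v /=; lra.
have Hspace : l1 <= l2.
  apply: (L_le Lw1 Lw2) => e e01.
  have [wd1 _] := Lw1; have [wd2 _] := Lw2.
  apply: Leps_le => //.
  - exact: wd1.
  - exact: wd2.
  apply: Lkern_le => //.
  - have w11 : 0 < (1:R) <= 1 by rewrite ltr01 lexx.
    exact: (wd1 1 w11).1.
  - have w11 : 0 < (1:R) <= 1 by rewrite ltr01 lexx.
    exact: (wd2 1 w11).1.
lra.
Qed.

Lemma zero_sol (R : realType) (d : nat) (mu : {measure set BRd R d -> \bar R})
  (J : 'rV[R]_d -> \bar R) (kappa : 'rV[R]_d -> 'rV[R]_d -> R) (c : Pcase) (T : R) :
  is_solution mu J kappa c T (fun _ _ => 0).
Proof.
have Lk : forall x eps z, Lintegrand J kappa c (fun _ : 'rV[R]_d => (0:R)) x eps z = 0%E.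
  move=> x eps z; rewrite /Lintegrand.
  have -> : Lkern c (fun _ : 'rV[R]_d => 0) x z = 0.
    have G : grad (fun _ : 'rV[R]_d => (0:R)) x = 0.
      by apply/rowP => i; rewrite !mxE; exact: (derive_cst (0:R)).
    have D : dotv z (grad (fun _ : 'rV[R]_d => (0:R)) x) = 0.
      by rewrite G /dotv big1 // => i _; rewrite mxE mulr0.
    by case: c => /=; rewrite ?D ?if_same; lra.
  by rewrite mul0r mul0e.
have LE : forall x eps, Leps mu J kappa c (fun _ : 'rV[R]_d => (0:R)) x eps = 0.
  move=> x eps; rewrite /Leps (_ : Lintegrand J kappa c (fun _ : 'rV[R]_d => (0:R)) x eps = cst (0%E : \bar R)).
    by rewrite integral0 /= mulr0.
  by apply: funext => z; exact: Lk.
split; [|split; [|split]].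
- by apply: continuous_subspaceT => p; exact: cvg_cst.
- move=> e e0; exists 1; split => // t x _ _; by rewrite subrr normr0 ltW.
- move=> e e0; exists 0 => r _ t x _ _; by rewrite normr0 ltW.
- move=> t x _; exists 0; split.
  + rewrite /dt_is; under eq_fun do rewrite subrr mul0r; exact: cvg_cst.
  + split.
    * move=> eps _; split; first by move=> _ i; exact: derivable_cst.
      rewrite (_ : Lintegrand J kappa c (fun _ : 'rV[R]_d => (0:R)) x eps = cst (0%E : \bar R)).
        exact: integrable0.
      by apply: funext => z; exact: Lk.
    * under eq_fun do rewrite LE; exact: cvg_cst.
Qed.
Theorem theorem4p1 (R : realType) (d : nat) (mu : {measure set BRd R d -> \bar R})
  (nu : R -> \bar R) (J : 'rV[R]_d -> \bar R) (Lam : R)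
  (kappa : 'rV[R]_d -> 'rV[R]_d -> R) (kappa0 kappa1 kappa2 beta : R)
  (c : Pcase) (T : R) :
  (0 < d)%N ->
  is_lebesgue mu ->
  (forall r, 0 <= r -> (0 <= nu r)%E) ->
  (forall r s, 0 <= r -> r <= s -> (nu s <= nu r)%E) ->
  (\int[mu]_x ((Order.min 1 (enorm x ^+ 2))%:E * nu (enorm x)) < +oo)%E ->
  measurable_fun [set: BRd R d] J ->
  1 <= Lam ->
  (forall x, ((Lam^-1)%:E * nu (enorm x) <= J x)%E /\ (J x <= Lam%:E * nu (enorm x))%E) ->
  measurable_fun [set: (BRd R d * BRd R d)%type] (fun p : BRd R d * BRd R d => kappa p.1 p.2) ->
  0 < kappa0 ->
  (forall x z, kappa0 <= kappa x z <= kappa1) ->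
  0 < beta < 1 ->
  (forall x y z, `|kappa x z - kappa y z| <= kappa2 * enorm (x - y) `^ beta) ->
  Pholds mu nu J kappa c ->
  0 < T ->
  (forall u : R -> 'rV[R]_d -> R, is_solution mu J kappa c T u ->
     (0 <= ereal_sup (range (fun x => (u 0 x)%:E)))%E ->
     forall t, 0 < t <= T ->
       (ereal_sup (range (fun x => (u t x)%:E)) <= ereal_sup (range (fun x => (u 0 x)%:E)))%E)
  /\
  (forall u1 u2 : R -> 'rV[R]_d -> R,
     is_solution mu J kappa c T u1 -> is_solution mu J kappa c T u2 ->
     (forall x, u1 0 x = u2 0 x) ->
     forall t x, 0 <= t <= T -> u1 t x = u2 t x).
Proof.
move=> d0 Hleb Hnu0 Hnumon Hint HJm Lam1 HJ Hkm k00 Hk b01 Hhol HP T0.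
have J0 : forall z, (0 <= J z)%E.
  move=> z; have [h _] := HJ z; apply: le_trans h; apply: mule_ge0.
    by rewrite lee_fin invr_ge0; apply: le_trans Lam1.
  by apply: Hnu0; exact: enorm_ge0.
have k0 : forall x z, 0 < kappa x z.
  by move=> x z; have /andP[h _] := Hk x z; exact: lt_le_trans h.
split.
- move=> u Su Hsup t /andP[t0 tT].
  set S := ereal_sup _ in Hsup *.
  have ub : forall x, ((u 0 x)%:E <= S)%E.
    by move=> x; apply: ereal_sup_ubound; exists x.
  move: Hsup ub; case: S => [M| |] Hsup ub.
  + apply: ge_ereal_sup => y [x _ <-]; rewrite lee_fin.
    have := @core R d mu J kappa c T u (fun _ _ => 0) M J0 k0 Su (zero_sol mu J kappa c T).
    rewrite -lee_fin; move=> /(_ Hsup) H.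
    have := H (fun x => _) t x; rewrite t0 tT subr0; apply => //.
    by move=> y'; rewrite subr0 -lee_fin.
  + by rewrite leey.
  + by [].
- move=> u1 u2 S1 S2 H0 t x /andP[t0 tT].
  have [tpos|tle] := ltrP 0 t.
    have tI : 0 < t <= T by rewrite tpos tT.
    have h1 := @core R d mu J kappa c T u1 u2 0 J0 k0 S1 S2 (lexx _)
      (fun y => ltac:(rewrite H0 subrr; exact: lexx)) t x tI.
    have h2 := @core R d mu J kappa c T u2 u1 0 J0 k0 S2 S1 (lexx _)
      (fun y => ltac:(rewrite H0 subrr; exact: lexx)) t x tI.
    lra.
  have -> : t = 0 by apply/eqP; rewrite eq_le tle t0.
  exact: H0.
Qed.
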